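(* Let $F$ be a CNF formula over variables $X \cup Y \cup Z$ (pairwise disjoint), $X=\{x_1,\ldots,x_n\}$, such that for every truth assignment to $X \cup Y$ the values of the variables in $Z$ are obtained from it by unit propagation in $F$. Let $c_X(F) = \{\gamma \vee \neg a \vee \neg b \mid \gamma \in F\} \cup \{\neg x_i \vee v_i \mid 1\le i\le n\} \cup \{x_i \vee v_i \mid 1\le i\le n\} \cup \{\neg v_1 \vee \cdots \vee \neg v_n \vee a\} \cup \{\neg v_1 \vee \cdots \vee \neg v_n \vee b\}$, where $a,b,v_1,\ldots,v_n$ are new variables. Then, with branching allowed only on $X \cup Y$, $$ s(c_X(F)) = 2^n - 1 + \sum_{X'} s(F|X'), $$ where $X'$ ranges over all truth assignments to the variables of $X$ and $s(F|X')$ is computed with branching restricted to $Y$.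
   Context: A CNF formula is a finite set of clauses; the empty clause is unsatisfiable. For a partial assignment $I$ (set of literals), $F|I$ is obtained by deleting clauses containing a literal true under $I$ and deleting false literals from remaining clauses. $Var(F)$ is the set of variables of $F$. A binary tree is empty $()$ or a triple $(x~T_1~T_2)$; its size is its number of nodes. $U(F)$ denotes the result of exhaustive unit propagation on $F$. For a set $B$ of variables, a DPLL-Mono search tree (DMST) of $F$ with branching restricted to $B$ is: $()$ if $U(F)$ contains the empty clause; otherwise $(x~T_1~T_2)$ with $x \in B \cap Var(U(F))$, $T_1$ a DMST of $U(F|\{\neg x\})$ and $T_2$ a DMST of $U(F|\{x\})$ (branching restricted to $B$). $s(\cdot)$ denotes the minimum size of such a DMST, and $\infty$ if none exists. *)

(* Defs.v *)
From mathcomp Require Import all_boot.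
From Stdlib Require Import ClassicalEpsilon.

Set Implicit Arguments.
Unset Strict Implicit.
Unset Printing Implicit Defensive.

(* Variables are natural numbers; a literal (x, true) is x, (x, false) is ~x. *)
Definition literal := (nat * bool)%type.
Definition clause := seq literal.   (* read as the set of its literals *)
Definition cnf := seq clause.       (* read as the set of its clauses *)

Definition neg_lit (l : literal) : literal := (l.1, ~~ l.2).

Definition restrict (F : cnf) (I : seq literal) : cnf :=
  [seq [seq l <- c | neg_lit l \notin I] | c <- F & ~~ has (fun l => l \in I) c].

Definition var_in (F : cnf) (x : nat) : bool :=
  has (fun c => has (fun l : literal => l.1 == x) c) F.

Definition unit_lit (F : cnf) : option literal :=
  match [seq c <- F | size (undup c) == 1] with
  | c :: _ => ohead c
  | [::] => None
  end.

(* exhaustive unit propagation; each step removes at least the unit clause,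
   so size F steps suffice *)
Fixpoint up (fuel : nat) (F : cnf) : cnf :=
  if fuel is k.+1 then
    (if unit_lit F is Some l then up k (restrict F [:: l]) else F)
  else F.

Definition U (F : cnf) : cnf := up (size F) F.

Inductive tree := Leaf | Node of nat & tree & tree.

Fixpoint tsize (T : tree) : nat :=
  if T is Node _ T1 T2 then (tsize T1 + tsize T2).+1 else 0.

Inductive dmst (B : pred nat) : cnf -> tree -> Prop :=
| dmst_leaf F : [::] \in U F -> dmst B F Leaf
| dmst_node F x T1 T2 :
    [::] \notin U F -> B x -> var_in (U F) x ->
    dmst B (U (restrict (U F) [:: (x, false)])) T1 ->
    dmst B (U (restrict (U F) [:: (x, true)])) T2 ->
    dmst B F (Node x T1 T2).

Definition has_tree_of_size (B : pred nat) (F : cnf) (k : nat) : Prop :=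
  exists T, dmst B F T /\ tsize T = k.

Definition htos_b (B : pred nat) (F : cnf) (k : nat) : bool :=
  if excluded_middle_informative (has_tree_of_size B F k) then true else false.

Lemma htos_b_ex (B : pred nat) (F : cnf) :
  (exists k, has_tree_of_size B F k) -> exists k, htos_b B F k.
Proof.
case=> k Hk; exists k; rewrite /htos_b.
by case: excluded_middle_informative.
Qed.

(* s(F): minimum size of a DMST (None = infinity) *)
Definition s (B : pred nat) (F : cnf) : option nat :=
  match excluded_middle_informative (exists k, has_tree_of_size B F k) with
  | left H => Some (ex_minn (htos_b_ex H))
  | right _ => None
  end.

Definition oadd (a b : option nat) : option nat :=
  match a, b with Some x, Some y => Some (x + y) | _, _ => None end.

Definition cX (n : nat) (xs vs : n.-tuple nat) (a b : nat) (F : cnf) : cnf :=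
  [seq g ++ [:: (a, false); (b, false)] | g <- F]
  ++ [seq [:: (p.1, false); (p.2, true)] | p <- zip xs vs]
  ++ [seq [:: (p.1, true); (p.2, true)] | p <- zip xs vs]
  ++ [:: rcons [seq (v, false) | v <- vs] (a, true);
         rcons [seq (v, false) | v <- vs] (b, true)].

Definition assign_X (n : nat) (xs : n.-tuple nat) (f : {ffun 'I_n -> bool})
  : seq literal := [seq (tnth xs i, f i) | i : 'I_n].

Definition assign_on (vs : seq nat) (f : nat -> bool) : seq literal :=
  [seq (x, f x) | x <- vs].

(* Main.v *)
Require Import Defs.
From mathcomp Require Import all_boot zify.
From Stdlib Require Import ClassicalEpsilon Classical.

Set Implicit Arguments.
Unset Strict Implicit.
Unset Printing Implicit Defensive.


Lemma neg_litK l : neg_lit (neg_lit l) = l.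
Proof. by case: l => x b; rewrite /neg_lit /= negbK. Qed.

Lemma neg_lit_neq l : neg_lit l != l.
Proof. by case: l => x b; rewrite /neg_lit /= xpair_eqE eqxx /=; case: b. Qed.

Definition consistent (I : seq literal) := forall l, l \in I -> neg_lit l \notin I.

Lemma restrict_cons c G (I : seq literal) :
  restrict (c :: G) I =
  if has (fun l => l \in I) c then restrict G I
  else [seq l <- c | neg_lit l \notin I] :: restrict G I.
Proof. by rewrite /restrict /=; case: (has _ c). Qed.

Lemma restrict_mem G (I J : seq literal) : I =i J -> restrict G I = restrict G J.
Proof.
move=> e; elim: G => [|c G IH] //; rewrite !restrict_cons IH.
rewrite (@eq_has _ _ (fun l => l \in J)); last by move=> l; rewrite e.
by rewrite (@eq_filter _ _ (fun l => neg_lit l \notin J)) // => l; rewrite e.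
Qed.

Lemma restrict_nil G : restrict G [::] = G.
Proof.
elim: G => [|c G IH] //; rewrite restrict_cons IH /=.
rewrite (@eq_has _ _ pred0) // has_pred0.
by rewrite (@eq_filter _ _ predT) // filter_predT.
Qed.

Lemma restrict_cat G (I J : seq literal) :
  (forall l, l \in J -> neg_lit l \notin I) ->
  restrict (restrict G I) J = restrict G (I ++ J).
Proof.
move=> HJ; elim: G => [|c G IH] //; rewrite restrict_cons.
have E1 : [seq l <- [seq l <- c | neg_lit l \notin I] | neg_lit l \notin J]
          = [seq l <- c | neg_lit l \notin I ++ J].
  rewrite -filter_predI; apply: eq_filter => l /=.
  by rewrite mem_cat negb_or andbC.
case hI: (has (fun l => l \in I) c) => /=.
  rewrite IH restrict_cons; have -> : has (fun l => l \in I ++ J) c;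
    [case/hasP: hI => l lc lI; apply/hasP; exists l; rewrite // mem_cat lI|] => //.
rewrite [LHS]restrict_cons IH restrict_cons.
have E2 : has (fun l => l \in J) [seq l <- c | neg_lit l \notin I]
          = has (fun l => l \in I ++ J) c.
  apply/hasP/hasP => [[l]|[l lc]].
    by rewrite mem_filter => /andP[_ lc] lJ; exists l; rewrite // mem_cat lJ orbT.
  rewrite mem_cat => /orP[lI|lJ].
    by move/negbT/hasPn: hI => /(_ l lc); rewrite lI.
  by exists l; rewrite // mem_filter HJ.
by rewrite E2 E1.
Qed.

Lemma mem_restrict G (I : seq literal) c' :
  reflect (exists2 c, c \in G &
             ~~ has (fun l => l \in I) c /\ c' = [seq l <- c | neg_lit l \notin I])
          (c' \in restrict G I).
Proof.
apply: (iffP mapP) => [[c]|[c cG [h ->]]].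
  by rewrite mem_filter => /andP[h cG] ->; exists c.
by exists c; rewrite // mem_filter h.
Qed.

Lemma var_in_restrictP G (I : seq literal) x :
  reflect (exists2 c, c \in G & ~~ has (fun l => l \in I) c /\
              exists2 l, l \in c & l.1 = x /\ neg_lit l \notin I)
          (var_in (restrict G I) x).
Proof.
apply: (iffP hasP) => [[c'] /mem_restrict [c cG [h ->]] /hasP [l]|
                       [c cG [h [l lc [lx nl]]]]].
  by rewrite mem_filter => /andP[nl lc] /eqP lx; exists c => //; split => //; exists l.
exists [seq l <- c | neg_lit l \notin I]; first by apply/mem_restrict; exists c.
by apply/hasP; exists l; rewrite ?mem_filter ?nl ?lx.
Qed.

Lemma restrict_novar G l : ~~ var_in G l.1 -> restrict G [:: l] = G.
Proof.
elim: G => [|c G IH] //= H; rewrite restrict_cons.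
move: H; rewrite /var_in /= negb_or => /andP[H1 H2]; rewrite IH //.
have h1 : ~~ has (fun l0 => l0 \in [:: l]) c.
  apply/hasP => [[l' l'c]]; rewrite inE => /eqP el; move/hasP: H1; apply.
  by exists l'; rewrite // el.
rewrite (negbTE h1); congr (_ :: _); rewrite -[RHS]filter_predT; apply: eq_in_filter => l' l'c.
rewrite inE /=; apply/negP => /eqP el; move/hasP: H1; apply; exists l' => //.
by rewrite -el.
Qed.

Lemma unit_litP G l : unit_lit G = Some l ->
  exists2 c, c \in G & l \in c /\ forall l', l' \in c -> l' = l.
Proof.
rewrite /unit_lit; case E: [seq c <- G | _] => [|c r] //.
have : c \in [seq c <- G | size (undup c) == 1] by rewrite E mem_head.
rewrite mem_filter => /andP[/eqP sz cG].
case: c E sz cG => [|l0 c] // E sz cG [<-]; exists (l0 :: c) => //; split.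
  by rewrite mem_head.
move=> l' l'c.
have h0 : l0 \in undup (l0 :: c) by rewrite mem_undup mem_head.
have h' : l' \in undup (l0 :: c) by rewrite mem_undup.
move: sz h0 h'; case: (undup (l0 :: c)) => [|u [|u2 r2]] // _.
by rewrite !inE => /eqP -> /eqP.
Qed.

Lemma unit_litN G : unit_lit G = None -> forall c, c \in G -> size (undup c) != 1.
Proof.
rewrite /unit_lit; case E: [seq c <- G | _] => [|c r] //.
  move=> _ c cG; apply/negP => h.
  have : c \in [seq c <- G | size (undup c) == 1] by rewrite mem_filter h.
  by rewrite E.
have : c \in [seq c <- G | size (undup c) == 1] by rewrite E mem_head.
by rewrite mem_filter => /andP[/eqP sz _]; case: c {E} sz.
Qed.

Lemma size_restrict_lt (G : cnf) (c : clause) (l : literal) : c \in G -> l \in c -> size (restrict G [:: l]) < size G.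
Proof.
move=> cG lc; rewrite /restrict size_map size_filter.
set p := (fun c0 => ~~ has (fun l0 => l0 \in [:: l]) c0).
have h : has (predC p) G.
  by apply/hasP; exists c => //=; rewrite /p negbK; apply/hasP; exists l; rewrite ?inE.
have := count_predC p G; move: h; rewrite has_count; move=> h1 h2; move: h1 h2 => h1 <-; by rewrite -[X in X < _]addn0 ltn_add2l.
Qed.

Lemma up_stop k G : size G <= k -> unit_lit (up k G) = None.
Proof.
elim: k G => [|k IH] G /=.
  by rewrite leqn0 => /nilP ->.
case E: (unit_lit G) => [l|] // h; apply: IH.
case/unit_litP: E => c cG [lc _].
by have := size_restrict_lt cG lc; lia.
Qed.

Lemma up_fix k G : unit_lit G = None -> up k G = G.
Proof. by case: k => //= k ->. Qed.

Lemma U_idem G : U (U G) = U G.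
Proof. by rewrite {1}/U up_fix // /U up_stop. Qed.

Lemma U_nounit G : unit_lit (U G) = None.
Proof. by rewrite /U up_stop. Qed.


Lemma dmst_sameU B G H T : U G = U H -> dmst B G T -> dmst B H T.
Proof.
move=> E D; inversion D; subst.
  by apply: dmst_leaf; rewrite -E.
by apply: dmst_node; rewrite -?E.
Qed.

Lemma dmst_conf B G H T : [::] \in U G -> [::] \in U H -> dmst B G T -> dmst B H T.
Proof.
move=> hG hH D; inversion D; subst.
  exact: dmst_leaf.
by rewrite hG in H0.
Qed.

Lemma dmst_U B H T : dmst B (U H) T <-> dmst B H T.
Proof. by split; apply: dmst_sameU; rewrite U_idem. Qed.

Inductive Der (G : cnf) (I : seq literal) : literal -> Prop :=
| DerI l : l \in I -> Der G I l
| DerC c l : c \in G -> l \in c ->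
    (forall l', l' \in c -> l' != l -> Der G I (neg_lit l')) -> Der G I l.

Lemma Der_trans G I1 I2 l :
  (forall m, m \in I2 -> Der G I1 m) -> Der G I2 l -> Der G I1 l.
Proof.
move=> H; elim => [m mI | c m cG mc _ IH]; first exact: H.
by apply: (DerC cG mc) => l' l'c nl; apply: IH.
Qed.

Lemma Der_sub G (I1 I2 : seq literal) l :
  {subset I1 <= I2} -> Der G I1 l -> Der G I2 l.
Proof. by move=> s; apply: Der_trans => m mI; apply: DerI; apply: s. Qed.

Definition Conf (G : cnf) (I : seq literal) := exists2 c, c \in G & forall l, l \in c -> Der G I (neg_lit l).

Lemma consistent_cat1 (J : seq literal) l :
  consistent J -> l \notin J -> neg_lit l \notin J -> consistent (J ++ [:: l]).
Proof.
move=> cJ lJ nlJ m; rewrite !mem_cat !inE => /orP[mJ|/eqP ->].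
  rewrite (negbTE (cJ _ mJ)) /=; apply/eqP => e.
  by move: mJ; rewrite -[m]neg_litK e (negbTE nlJ).
by rewrite (negbTE nlJ) /= neg_lit_neq.
Qed.

Lemma up_inv G I k A :
  consistent (I ++ A) -> (forall l, l \in A -> Der G I l) ->
  exists A', [/\ up k (restrict G (I ++ A)) = restrict G (I ++ A'),
                 consistent (I ++ A') & forall l, l \in A' -> Der G I l].
Proof.
elim: k A => [|k IH] A cA DA; first by exists A.
rewrite /=; case E: (unit_lit _) => [l|]; last by exists A.
case/unit_litP: E => c' /mem_restrict [c cG [hc ->]] [lc' allc].
move: lc'; rewrite mem_filter => /andP[nl lc].
have lIA : l \notin I ++ A by apply/negP => h; move/hasP: hc; apply; exists l.
have Dl : Der G I l.
  apply: (DerC cG lc) => l' l'c ne.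
  case h: (neg_lit l' \in I ++ A).
    by move: h; rewrite mem_cat => /orP[h|h]; [apply: DerI|apply: DA].
  by move: ne; rewrite (allc l') ?eqxx // mem_filter h.
rewrite restrict_cat; last by move=> m; rewrite inE => /eqP ->.
have h1 : consistent (I ++ (A ++ [:: l])).
  by rewrite catA; apply: consistent_cat1.
have h2 : forall m, m \in A ++ [:: l] -> Der G I m.
  by move=> m; rewrite mem_cat inE => /orP[/DA|/eqP ->].
have [A' [e1 e2 e3]] := IH (A ++ [:: l]) h1 h2.
by exists A'; rewrite -e1 catA.
Qed.

Lemma U_char G I : consistent I ->
  exists J, [/\ U (restrict G I) = restrict G J, consistent J, {subset I <= J},
                (forall l, l \in J -> Der G I l) & unit_lit (restrict G J) = None].
Proof.
move=> cI; have [A' [e1 e2 e3]] := @up_inv G I (size (restrict G I)) [::]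
  ltac:(by rewrite cats0) ltac:(by []).
move: e1; rewrite cats0 => e1.
exists (I ++ A'); split => //.
- by move=> l lI; rewrite mem_cat lI.
- by move=> l; rewrite mem_cat => /orP[/DerI|/e3].
- by rewrite -e1 U_nounit.
Qed.

Lemma undup_one (c : clause) l : l \in c -> (forall m, m \in c -> m = l) ->
  size (undup c) = 1.
Proof.
move=> lc H; apply/eqP; rewrite eqn_leq; apply/andP; split.
  have -> : 1 = size [:: l] by [].
  apply: uniq_leq_size; first exact: undup_uniq.
  by move=> m; rewrite mem_undup => /H ->; rewrite inE.
by case E: (undup c) => [|u r] //; move: lc; rewrite -mem_undup E.
Qed.

Lemma Der_complete G I J l :
  consistent J -> {subset I <= J} -> unit_lit (restrict G J) = None ->
  [::] \notin restrict G J -> Der G I l -> l \in J.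
Proof.
move=> cJ sIJ nu ne; elim => [m mI | c m cG mc _ IH]; first exact: sIJ.
case mJ: (m \in J) => //.
have hc : ~~ has (fun l0 => l0 \in J) c.
  apply/hasP => [[l' l'c l'J]].
  have nel : l' != m by apply/eqP => e; rewrite -e l'J in mJ.
  by move: (IH l' l'c nel); rewrite (negbTE (cJ _ l'J)).
have c'in : [seq l0 <- c | neg_lit l0 \notin J] \in restrict G J.
  by apply/mem_restrict; exists c.
case nm: (neg_lit m \in J).
  have E : [seq l0 <- c | neg_lit l0 \notin J] = [::].
    apply/eqP; rewrite -[_ == _]negbK -has_filter; apply/hasP => [[l' l'c]].
    case: (eqVneq l' m) => [->|ne']; first by rewrite nm.
    by rewrite (IH l' l'c ne').
  by move: c'in; rewrite E (negbTE ne).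
have := unit_litN nu c'in.
rewrite (@undup_one _ m) //; first by rewrite mem_filter nm.
move=> m'; rewrite mem_filter => /andP[h m'c].
case: (eqVneq m' m) => // ne'; by rewrite (IH m' m'c ne') in h.
Qed.

Lemma U_conf G I : consistent I -> ([::] \in U (restrict G I) <-> Conf G I).
Proof.
move=> cI; have [J [e cJ sIJ DJ nu]] := U_char G cI; rewrite e; split.
  case/mem_restrict => c cG [hc E]; exists c => // l lc.
  apply: DJ; apply/negPn/negP => h.
  have : l \in [seq l0 <- c | neg_lit l0 \notin J] by rewrite mem_filter h lc.
  by rewrite -E.
case=> c cG H; apply/negPn/negP => ne.
have cmp := fun l => @Der_complete G I J l cJ sIJ nu ne.
apply: (negP ne); apply/mem_restrict; exists c => //; split.
  apply/hasP => [[l lc lJ]].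
  by move: (cJ _ lJ); rewrite (cmp _ (H l lc)).
apply/esym/eqP; rewrite -[_ == _]negbK -has_filter; apply/hasP => [[l lc]].
by rewrite (cmp _ (H l lc)).
Qed.

Lemma U_der G I : consistent I -> ~ Conf G I ->
  exists J, [/\ U (restrict G I) = restrict G J, consistent J &
                forall l, l \in J <-> Der G I l].
Proof.
move=> cI nC; have [J [e cJ sIJ DJ nu]] := U_char G cI.
have ne : [::] \notin restrict G J.
  by apply/negP => h; apply: nC; apply/(U_conf G cI); rewrite e.
exists J; split => // l; split; first exact: DJ.
exact: Der_complete.
Qed.

Lemma dmst_key B G I1 I2 T :
  consistent I1 -> consistent I2 -> (forall l, Der G I1 l <-> Der G I2 l) ->
  dmst B (restrict G I1) T -> dmst B (restrict G I2) T.
Proof.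
move=> c1 c2 E.
have CE : Conf G I1 <-> Conf G I2.
  by split; case=> c cG H; exists c => // l lc; apply/E; apply: H.
case: (classic (Conf G I1)) => h.
  apply: dmst_conf; first by apply/(U_conf G c1).
  by apply/(U_conf G c2)/CE.
have h2 : ~ Conf G I2 by move/CE.
have [J1 [e1 cJ1 D1]] := U_der c1 h; have [J2 [e2 cJ2 D2]] := U_der c2 h2.
apply: dmst_sameU; rewrite e1 e2; apply: restrict_mem => l.
apply/idP/idP => [/D1/E/D2|/D2/E/D1] //.
Qed.

Lemma var_in_U_notDer G I x b : consistent I -> ~ Conf G I ->
  var_in (U (restrict G I)) x -> ~ Der G I (x, b).
Proof.
move=> cI nC; have [J [e cJ DJ]] := U_der cI nC; rewrite e.
case/var_in_restrictP => c cG [hc [l lc [lx nl]]] /DJ xJ.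
have : ((x, b) == l) || ((x, b) == neg_lit l).
  by case: l lc lx nl {hc} => y bl /= _ ->; rewrite /neg_lit /= !xpair_eqE eqxx /=; case: b bl {xJ} => [] [].
case/orP => /eqP e'.
  by move/hasP: hc; apply; exists l; rewrite // -e'.
by rewrite -e' xJ in nl.
Qed.

Lemma dmst_child B G I x b T : consistent I -> ~ Conf G I ->
  var_in (U (restrict G I)) x ->
  dmst B (U (restrict (U (restrict G I)) [:: (x, b)])) T <->
  dmst B (restrict G (I ++ [:: (x, b)])) T.
Proof.
move=> cI nC vx.
have nD := fun b' => @var_in_U_notDer G I x b' cI nC vx.
have [J [e cJ DJ]] := U_der cI nC; rewrite e.
have xbJ : (x, b) \notin J by apply/negP => /DJ /nD.
have nxbJ : neg_lit (x, b) \notin J by apply/negP => /DJ /nD.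
rewrite restrict_cat; last by move=> m; rewrite inE => /eqP ->.
rewrite dmst_U.
have c1 : consistent (J ++ [:: (x, b)]) by apply: consistent_cat1.
have c2 : consistent (I ++ [:: (x, b)]).
  apply: consistent_cat1 => //; apply/negP => h; [apply: (negP xbJ)|apply: (negP nxbJ)];
  by apply/DJ/DerI.
have E : forall l, Der G (J ++ [:: (x, b)]) l <-> Der G (I ++ [:: (x, b)]) l.
  move=> l; split; apply: Der_trans => m; rewrite mem_cat inE => /orP[h|/eqP ->].
  - by apply: (Der_sub (I1 := I)); [move=> z; rewrite mem_cat => ->|apply/DJ].
  - by apply: DerI; rewrite mem_cat inE eqxx orbT.
  - by apply: DerI; rewrite mem_cat (_ : m \in J) //; apply/DJ/DerI.
  - by apply: DerI; rewrite mem_cat inE eqxx orbT.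
split; first by apply: dmst_key => // l; exact: E.
by apply: dmst_key => // l; exact: iff_sym (E l).
Qed.

Lemma dmst_nodeP B G I x T1 T2 : consistent I ->
  dmst B (restrict G I) (Node x T1 T2) <->
  [/\ ~ Conf G I, B x, var_in (U (restrict G I)) x,
      dmst B (restrict G (I ++ [:: (x, false)])) T1 &
      dmst B (restrict G (I ++ [:: (x, true)])) T2].
Proof.
move=> cI; split.
  move=> h; inversion h; subst.
  have nC : ~ Conf G I by move/(U_conf G cI); apply/negP.
  by split => //; apply/dmst_child.
case=> nC Bx vx h1 h2; apply: dmst_node => //.
- by apply/negP => /(U_conf G cI).
- by apply/dmst_child.
- by apply/dmst_child.
Qed.

Lemma dmst_leafP B G I : consistent I ->
  dmst B (restrict G I) Leaf <-> Conf G I.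
Proof.
move=> cI; split.
  by move=> h; inversion h; subst; apply/(U_conf G cI).
by move/(U_conf G cI) => h; apply: dmst_leaf.
Qed.

Lemma tree_split (B : pred nat) (G : cnf) (I : seq literal) (y : nat) (k0 k1 : nat) : consistent I -> B y ->
  (forall b, (y, b) \notin I) ->
  has_tree_of_size B (restrict G (I ++ [:: (y, false)])) k0 ->
  has_tree_of_size B (restrict G (I ++ [:: (y, true)])) k1 ->
  exists2 k, has_tree_of_size B (restrict G I) k & k <= (k0 + k1).+1.
Proof.
move=> cI By ny [T0 [h0 s0]] [T1 [h1 s1]].
have cIb : forall b, consistent (I ++ [:: (y, b)]).
  by move=> b; apply: consistent_cat1 => //; apply: ny.
case: (classic (Conf G I)) => nC.
  by exists 0 => //; exists Leaf; split => //; apply/dmst_leafP.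
case: (boolP (var_in (U (restrict G I)) y)) => vy.
  exists (k0 + k1).+1 => //; exists (Node y T0 T1); split; last by rewrite /= s0 s1.
  by apply/dmst_nodeP.
have [J [e cJ DJ]] := U_der cI nC.
have sIJ : {subset I <= J} by move=> m mI; apply/DJ/DerI.
case: (boolP ((y, false) \in J)) => yf.
  exists k0; last by lia.
  exists T0; split => //; apply: (dmst_key (cIb false)) => // l.
  split; apply: Der_trans => m.
    by rewrite mem_cat inE => /orP[/DerI //|/eqP ->]; apply/DJ.
  by move=> mI; apply: DerI; rewrite mem_cat mI.
case: (boolP ((y, true) \in J)) => yt.
  exists k1; last by lia.
  exists T1; split => //; apply: (dmst_key (cIb true)) => // l.
  split; apply: Der_trans => m.
    by rewrite mem_cat inE => /orP[/DerI //|/eqP ->]; apply/DJ.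
  by move=> mI; apply: DerI; rewrite mem_cat mI.
exists k0; last by lia.
exists T0; split => //.
have cJf : consistent (J ++ [:: (y, false)]) by apply: consistent_cat1.
have h0' : dmst B (restrict G (J ++ [:: (y, false)])) T0.
  apply: (dmst_key (cIb false)) => // l.
  split; apply: Der_trans => m; rewrite mem_cat inE => /orP[h|/eqP ->].
  - by apply: DerI; rewrite mem_cat (sIJ _ h).
  - by apply: DerI; rewrite mem_cat inE eqxx orbT.
  - by apply: (Der_sub (I1 := I)); [move=> z; rewrite mem_cat => ->|apply/DJ].
  - by apply: DerI; rewrite mem_cat inE eqxx orbT.
move: h0'; rewrite -restrict_cat; last by move=> m; rewrite inE => /eqP ->.
rewrite restrict_novar; last by rewrite -e.
by rewrite -e => /dmst_U.
Qed.


Section CX.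
Variables (n : nat) (xs vs : n.-tuple nat) (ys zs : seq nat) (F : cnf) (a b : nat).
Hypothesis Hux : uniq xs.
Hypothesis Hxy : all (fun x => x \notin ys) xs.
Hypothesis HF : forall x, var_in F x -> x \in xs ++ ys ++ zs.
Hypothesis Huv : uniq (a :: b :: vs).
Hypothesis Hnew : all (fun v => v \notin xs ++ ys ++ zs) (a :: b :: vs).

Local Notation X i := (tnth xs i).
Local Notation V i := (tnth vs i).
Local Notation C := (cX xs vs a b F).

Definition isnew z := (z == a) || (z == b) || (z \in vs).

Lemma X_inj i j : X i = X j -> i = j.
Proof. by move/tuple_uniqP: Hux; apply. Qed.

Lemma V_inj i j : V i = V j -> i = j.
Proof. by move: Huv => /= /andP[_ /andP[_ /tuple_uniqP]]; apply. Qed.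

Lemma ab_ne : a != b.
Proof. by move: Huv => /= /andP[]; rewrite inE negb_or => /andP[]. Qed.

Lemma new_old z : isnew z -> z \notin xs ++ ys ++ zs.
Proof.
move: Hnew => /= /and3P[ha hb /allP hv].
by case/orP => [/orP[]|] => [/eqP ->|/eqP ->|/hv].
Qed.

Lemma new_notx z : isnew z -> z \notin xs.
Proof. by move/new_old; rewrite !mem_cat !negb_or => /andP[]. Qed.
Lemma new_noty z : isnew z -> z \notin ys.
Proof. by move/new_old; rewrite !mem_cat !negb_or => /and3P[]. Qed.

Lemma isnew_a : isnew a. Proof. by rewrite /isnew eqxx. Qed.
Lemma isnew_b : isnew b. Proof. by rewrite /isnew eqxx !orbT. Qed.
Lemma isnew_V i : isnew (V i). Proof. by rewrite /isnew mem_tnth !orbT. Qed.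

Lemma X_noty i : X i \notin ys.
Proof. by move/allP: Hxy; apply; rewrite mem_tnth. Qed.

Lemma X_old i : ~~ isnew (X i).
Proof. by apply/negP => /new_notx; rewrite mem_tnth. Qed.

Lemma y_old y : y \in ys -> ~~ isnew y.
Proof. by move=> yy; apply/negP => /new_noty; rewrite yy. Qed.

Lemma F_old g l : g \in F -> l \in g -> ~~ isnew l.1.
Proof.
move=> gF lg; apply/negP => /new_old; rewrite HF //.
by apply/hasP; exists g => //; apply/hasP; exists l.
Qed.

Lemma a_neq_V i : (a == V i) = false.
Proof.
apply/negP => /eqP e; move: Huv => /= /andP[]; rewrite inE negb_or e mem_tnth.
by rewrite andbF.
Qed.
Lemma b_neq_V i : (b == V i) = false.
Proof.
apply/negP => /eqP e; move: Huv => /= /andP[_ /andP[]]; rewrite e mem_tnth //.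
Qed.

Definition La := rcons [seq (v, false) | v <- vs] (a, true).
Definition Lb := rcons [seq (v, false) | v <- vs] (b, true).

Lemma zipE : zip xs vs = [seq (X i, V i) | i <- enum 'I_n].
Proof. by rewrite -{1}(map_tnth_enum xs) -{1}(map_tnth_enum vs) zip_map. Qed.

Lemma memC c : c \in C ->
  [\/ (exists2 g, g \in F & c = g ++ [:: (a, false); (b, false)]),
      (exists i, c = [:: (X i, false); (V i, true)]),
      (exists i, c = [:: (X i, true); (V i, true)]) |
      c = La \/ c = Lb].
Proof.
rewrite /cX !mem_cat zipE -!map_comp !inE.
case/or4P => [/mapP [g gF ->]|/mapP [i _ ->]|/mapP [i _ ->]|/orP[/eqP ->|/eqP ->]].
- by apply: Or41; exists g.
- by apply: Or42; exists i.
- by apply: Or43; exists i.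
- by apply: Or44; left.
- by apply: Or44; right.
Qed.

Lemma memC_F g : g \in F -> g ++ [:: (a, false); (b, false)] \in C.
Proof. by move=> gF; rewrite /cX mem_cat (map_f _ gF). Qed.
Lemma memC_X0 i : [:: (X i, false); (V i, true)] \in C.
Proof.
rewrite /cX !mem_cat zipE -!map_comp; apply/orP; right; apply/orP; left.
by apply/mapP; exists i; rewrite ?mem_enum.
Qed.
Lemma memC_X1 i : [:: (X i, true); (V i, true)] \in C.
Proof.
rewrite /cX !mem_cat zipE -!map_comp; apply/orP; right; apply/orP; right.
apply/orP; left; by apply/mapP; exists i; rewrite ?mem_enum.
Qed.
Lemma memC_La : La \in C.
Proof. by rewrite /cX !mem_cat !inE eqxx !orbT. Qed.
Lemma memC_Lb : Lb \in C.
Proof. by rewrite /cX !mem_cat !inE eqxx !orbT. Qed.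

Lemma memL (l : literal) z : l \in rcons [seq (v, false) | v <- vs] (z, true) ->
  l = (z, true) \/ exists i, l = (V i, false).
Proof.
rewrite mem_rcons inE => /orP[/eqP ->|/mapP [v /tnthP [i ->] ->]]; first by left.
by right; exists i.
Qed.

Lemma memL_V z i : (V i, false) \in rcons [seq (v, false) | v <- vs] (z, true).
Proof. by rewrite mem_rcons inE; apply/orP; right; apply/mapP; exists (V i); rewrite ?mem_tnth. Qed.


Implicit Types (p : {ffun 'I_n -> option bool}) (Q : seq literal) (l : literal) (i : 'I_n).
Definition P (p : {ffun 'I_n -> option bool}) : seq literal :=
  [seq (X i, odflt false (p i)) | i <- enum 'I_n & p i != None].

Lemma memP p x t : (x, t) \in P p <-> exists2 i, p i = Some t & x = X i.
Proof.
split.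
  case/mapP => i; rewrite mem_filter => /andP[h _] [-> ->]; exists i => //.
  by case: (p i) h.
case=> i pi ->; apply/mapP; exists i; first by rewrite mem_filter pi mem_enum.
by rewrite pi.
Qed.

Lemma memP_X p i t : ((X i, t) \in P p) = (p i == Some t).
Proof.
apply/idP/eqP; last by move=> h; apply/memP; exists i.
by case/memP => j pj /X_inj ->.
Qed.

Lemma memP_var p l : l \in P p -> l.1 \in xs.
Proof. by case: l => x t /memP [i _ ->]; rewrite mem_tnth. Qed.

Definition Qok (Q : seq literal) := consistent Q /\ forall l, l \in Q -> l.1 \in ys.

Lemma xs_noty x : x \in xs -> x \notin ys.
Proof. by move/allP: Hxy; apply. Qed.

Lemma cons_PQ p Q : Qok Q -> consistent (P p ++ Q).
Proof.
case=> cQ vQ [x t]; rewrite !mem_cat => /orP[|lQ].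
  case/memP => i pi ->; rewrite /neg_lit /= memP_X pi.
  apply/negP => /orP[/eqP []|h]; first by move=> e; move: e pi; case: t.
  move: (vQ _ h) => /=; apply/negP; exact: X_noty.
rewrite negb_or (cQ _ lQ) andbT; apply/negP => /memP_var /= /xs_noty.
by rewrite (vQ _ lQ).
Qed.

Definition Dp p Q (l : literal) :=
  l \in P p ++ Q \/ exists2 i, l = (V i, true) & p i != None.

Lemma Dp_inv p Q z t : Qok Q -> isnew z -> Dp p Q (z, t) ->
  exists2 i, z = V i & t /\ p i != None.
Proof.
case=> cQ vQ zn [|[i [-> ->] pi]]; last by exists i.
rewrite mem_cat => /orP[/memP_var|h]; last move: (vQ _ h) => /=.
  by rewrite /= (negbTE (new_notx zn)).
by rewrite (negbTE (new_noty zn)).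
Qed.

Lemma Dp_X p Q i t : Qok Q -> Dp p Q (X i, t) -> p i = Some t.
Proof.
case=> cQ vQ [|[j [e _] _]]; last by move: (X_old i); rewrite e isnew_V.
rewrite mem_cat memP_X => /orP[/eqP //|h]; move: (vQ _ h) => /=.
by rewrite (negbTE (X_noty i)).
Qed.

Lemma Dp_a p Q t : Qok Q -> ~ Dp p Q (a, t).
Proof. by move=> hQ /(Dp_inv hQ isnew_a) [i e _]; move: (a_neq_V i); rewrite e eqxx. Qed.
Lemma Dp_b p Q t : Qok Q -> ~ Dp p Q (b, t).
Proof. by move=> hQ /(Dp_inv hQ isnew_b) [i e _]; move: (b_neq_V i); rewrite e eqxx. Qed.
Lemma Dp_Vf p Q i : Qok Q -> ~ Dp p Q (V i, false).
Proof. by move=> hQ /(Dp_inv hQ (isnew_V i)) [j _ []]. Qed.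

Lemma mem2 (l l1 l2 : literal) : l \in [:: l1; l2] -> l = l1 \/ l = l2.
Proof. by rewrite !inE => /orP[/eqP|/eqP]; [left|right]. Qed.

Lemma partial_Der p Q i0 l : Qok Q -> p i0 = None ->
  Der C (P p ++ Q) l -> Dp p Q l.
Proof.
move=> hQ pi0; elim => [m mI | c m cG mc _ IH]; first by left.
case/memC: cG mc IH => [[g gF ->]|[i ->]|[i ->]|[->|->]] mc IH.
- case: (eqVneq m (a, false)) => [em|nm].
    have : (b, false) != m by rewrite em xpair_eqE eq_sym (negbTE ab_ne).
    move/(IH (b, false)); rewrite mem_cat !inE eqxx !orbT => /(_ isT) h.
    by case: (Dp_b hQ h).
  move: (IH (a, false)); rewrite mem_cat !inE eqxx !orbT eq_sym => /(_ isT nm) h.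
  by case: (Dp_a hQ h).
- case/mem2: mc => em; subst m.
    have h1 : (V i, true) \in [:: (X i, false); (V i, true)] by rewrite !inE eqxx orbT.
    have h2 : (V i, true) != (X i, false) by rewrite xpair_eqE andbF.
    by case: (Dp_Vf hQ (IH _ h1 h2)).
  have h1 : (X i, false) \in [:: (X i, false); (V i, true)] by rewrite !inE eqxx.
  have h2 : (X i, false) != (V i, true) by rewrite xpair_eqE andbF.
  move: (IH _ h1 h2) => /(Dp_X hQ) pi; right; exists i => //; by rewrite pi.
- case/mem2: mc => em; subst m.
    have h1 : (V i, true) \in [:: (X i, true); (V i, true)] by rewrite !inE eqxx orbT.
    have h2 : (V i, true) != (X i, true).
      by rewrite xpair_eqE andbT; apply/eqP => e; move: (X_old i); rewrite -e isnew_V.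
    by case: (Dp_Vf hQ (IH _ h1 h2)).
  have h1 : (X i, true) \in [:: (X i, true); (V i, true)] by rewrite !inE eqxx.
  have h2 : (X i, true) != (V i, true).
    by rewrite xpair_eqE andbT; apply/eqP => e; move: (X_old i); rewrite e isnew_V.
  move: (IH _ h1 h2) => /(Dp_X hQ) pi; right; exists i => //; by rewrite pi.
- case/memL: mc => [em|[j em]]; subst m.
    move: (IH (V i0, false) (memL_V _ _)); rewrite xpair_eqE eq_sym a_neq_V.
    move=> /(_ isT) /(Dp_inv hQ (isnew_V i0)) [j /V_inj <- []].
    by rewrite pi0.
  move: (IH (a, true)); rewrite mem_rcons mem_head xpair_eqE a_neq_V.
  by move=> /(_ isT isT) /(Dp_a hQ).
- case/memL: mc => [em|[j em]]; subst m.
    move: (IH (V i0, false) (memL_V _ _)); rewrite xpair_eqE eq_sym b_neq_V.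
    move=> /(_ isT) /(Dp_inv hQ (isnew_V i0)) [j /V_inj <- []].
    by rewrite pi0.
  move: (IH (b, true)); rewrite mem_rcons mem_head xpair_eqE b_neq_V.
  by move=> /(_ isT isT) /(Dp_b hQ).
Qed.

Lemma partial_noConf p Q i0 : Qok Q -> p i0 = None -> ~ Conf C (P p ++ Q).
Proof.
move=> hQ pi0 [c cG H].
have D := fun l lc => partial_Der hQ pi0 (H l lc).
case/memC: cG H D => [[g gF ->]|[i ->]|[i ->]|[->|->]] H D.
- by move: (D (a, false)); rewrite mem_cat !inE eqxx !orbT => /(_ isT) /(Dp_a hQ).
- by move: (D (V i, true)); rewrite !inE eqxx !orbT => /(_ isT) /(Dp_Vf hQ).
- by move: (D (V i, true)); rewrite !inE eqxx !orbT => /(_ isT) /(Dp_Vf hQ).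
- by move: (D (a, true)); rewrite mem_rcons mem_head => /(_ isT) /(Dp_a hQ).
- by move: (D (b, true)); rewrite mem_rcons mem_head => /(_ isT) /(Dp_b hQ).
Qed.

Lemma partial_var p Q i : Qok Q -> p i = None ->
  var_in (U (restrict C (P p ++ Q))) (X i).
Proof.
move=> hQ pi.
have [J [e cJ DJ]] := U_der (cons_PQ (p:=p) hQ) (partial_noConf hQ pi).
rewrite e; apply/var_in_restrictP; exists [:: (X i, false); (V i, true)].
  exact: memC_X0.
split.
  apply/hasP => [[l /mem2 [->|->] /DJ /(partial_Der hQ pi)]].
    by move/(Dp_X hQ); rewrite pi.
  by case/(Dp_inv hQ (isnew_V i)) => j /V_inj <- []; rewrite pi.
exists (X i, false); rewrite ?inE ?eqxx //; split => //.
by apply/negP => /DJ /(partial_Der hQ pi) /(Dp_X hQ); rewrite pi.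
Qed.


Implicit Types (f : {ffun 'I_n -> bool}).

Lemma memAX f x t : (x, t) \in assign_X xs f <-> exists2 i, x = X i & t = f i.
Proof.
split; first by case/imageP => i _ [-> ->]; exists i.
by case=> i -> ->; apply/imageP; exists i.
Qed.

Lemma memAX_X f i t : ((X i, t) \in assign_X xs f) = (t == f i).
Proof.
apply/idP/eqP; last by move=> ->; apply/memAX; exists i.
by case/memAX => j /X_inj -> ->.
Qed.

Lemma memAX_var f l : l \in assign_X xs f -> l.1 \in xs.
Proof. by case: l => x t /memAX [i -> _]; rewrite mem_tnth. Qed.

Lemma cons_AQ f Q : Qok Q -> consistent (assign_X xs f ++ Q).
Proof.
case=> cQ vQ [x t]; rewrite !mem_cat => /orP[|lQ].
  case/memAX => i -> ->; rewrite /neg_lit /= memAX_X.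
  apply/negP => /orP[/eqP|h]; first by case: (f i).
  move: (vQ _ h) => /=; apply/negP; exact: X_noty.
rewrite negb_or (cQ _ lQ) andbT; apply/negP => /memAX_var /= /xs_noty.
by rewrite (vQ _ lQ).
Qed.

Lemma IF_old f Q l : Qok Q -> l \in assign_X xs f ++ Q -> ~~ isnew l.1.
Proof.
case=> _ vQ; rewrite mem_cat => /orP[/memAX_var|/vQ/y_old //].
by move=> h; apply/negP => /new_notx; rewrite h.
Qed.

Lemma Der_V f Q i : Der C (assign_X xs f ++ Q) (V i, true).
Proof.
case fi: (f i).
  apply: (DerC (memC_X0 i)); first by rewrite !inE eqxx orbT.
  move=> l' /mem2 [->|->]; last by rewrite eqxx.
  by move=> _; apply: DerI; rewrite mem_cat memAX_X fi.
apply: (DerC (memC_X1 i)); first by rewrite !inE eqxx orbT.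
move=> l' /mem2 [->|->]; last by rewrite eqxx.
by move=> _; apply: DerI; rewrite mem_cat memAX_X fi.
Qed.

Lemma Der_L f Q z : rcons [seq (v, false) | v <- vs] (z, true) \in C ->
  Der C (assign_X xs f ++ Q) (z, true).
Proof.
move=> Lin; apply: (DerC Lin); first by rewrite mem_rcons mem_head.
by move=> l' /memL [->|[j ->]]; [rewrite eqxx|move=> _; apply: Der_V].
Qed.

Lemma Der_a f Q : Der C (assign_X xs f ++ Q) (a, true).
Proof. exact: Der_L memC_La. Qed.
Lemma Der_b f Q : Der C (assign_X xs f ++ Q) (b, true).
Proof. exact: Der_L memC_Lb. Qed.

Lemma DerF_C f Q l : Der F (assign_X xs f ++ Q) l -> Der C (assign_X xs f ++ Q) l.
Proof.
elim => [m mI|g m gF mg _ IH]; first exact: DerI.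
apply: (DerC (memC_F gF)); first by rewrite mem_cat mg.
move=> l'; rewrite mem_cat => /orP[l'g|/mem2 [->|->]]; first exact: IH.
  by move=> _; apply: Der_a.
by move=> _; apply: Der_b.
Qed.

Lemma DerC_F f Q l : Qok Q -> ~ Conf F (assign_X xs f ++ Q) ->
  Der C (assign_X xs f ++ Q) l ->
  (isnew l.1 -> l.2) /\ (~~ isnew l.1 -> Der F (assign_X xs f ++ Q) l).
Proof.
move=> hQ nC; elim => [m mI | c m cG mc _ IH].
  by split => [h|_]; [move: (IF_old hQ mI); rewrite h | apply: DerI].
case/memC: cG mc IH => [[g gF ->]|[i ->]|[i ->]|[->|->]] mc IH.
- move: mc; rewrite mem_cat => /orP[mg|/mem2 [em|em]]; try subst m.
  + split => [h|_]; first by move: (F_old gF mg); rewrite h.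
    apply: (DerC gF mg) => l' l'g ne.
    have := IH l'; rewrite mem_cat l'g => /(_ isT ne) [_]; apply.
    exact: (F_old gF l'g).
  + exfalso; apply: nC; exists g => // k kg.
    have ne : k != (a, false).
      by apply/eqP => e; move: (F_old gF kg); rewrite e /= isnew_a.
    have := IH k; rewrite mem_cat kg => /(_ isT ne) [_]; apply.
    exact: (F_old gF kg).
  + exfalso; apply: nC; exists g => // k kg.
    have ne : k != (b, false).
      by apply/eqP => e; move: (F_old gF kg); rewrite e /= isnew_b.
    have := IH k; rewrite mem_cat kg => /(_ isT ne) [_]; apply.
    exact: (F_old gF kg).
- case/mem2: mc => em; subst m.
    have h1 : (V i, true) \in [:: (X i, false); (V i, true)] by rewrite !inE eqxx orbT.
    have h2 : (V i, true) != (X i, false) by rewrite xpair_eqE andbF.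
    by case: (IH _ h1 h2) => /(_ (isnew_V i)).
  by split => // h; move: h; rewrite /= isnew_V.
- case/mem2: mc => em; subst m.
    have h1 : (V i, true) \in [:: (X i, true); (V i, true)] by rewrite !inE eqxx orbT.
    have h2 : (V i, true) != (X i, true).
      by rewrite xpair_eqE andbT; apply/eqP => e; move: (X_old i); rewrite -e isnew_V.
    by case: (IH _ h1 h2) => /(_ (isnew_V i)).
  by split => // h; move: h; rewrite /= isnew_V.
- case/memL: mc => [em|[j em]]; subst m.
    by split => // h; move: h; rewrite /= isnew_a.
  have h1 : (a, true) \in La by rewrite mem_rcons mem_head.
  have h2 : (a, true) != (V j, false) by rewrite xpair_eqE andbF.
  by case: (IH _ h1 h2) => /(_ isnew_a).
- case/memL: mc => [em|[j em]]; subst m.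
    by split => // h; move: h; rewrite /= isnew_b.
  have h1 : (b, true) \in Lb by rewrite mem_rcons mem_head.
  have h2 : (b, true) != (V j, false) by rewrite xpair_eqE andbF.
  by case: (IH _ h1 h2) => /(_ isnew_b).
Qed.

Lemma Conf_CF f Q : Qok Q ->
  (Conf C (assign_X xs f ++ Q) <-> Conf F (assign_X xs f ++ Q)).
Proof.
move=> hQ; split; last first.
  case=> g gF H; exists (g ++ [:: (a, false); (b, false)]); first exact: memC_F.
  move=> l; rewrite mem_cat => /orP[lg|/mem2 [->|->]].
  - exact: DerF_C (H l lg).
  - exact: Der_a.
  - exact: Der_b.
move=> hC; apply: NNPP => nC; case: hC => c cG H.
have D := fun l lc => DerC_F hQ nC (H l lc).
case/memC: cG H D => [[g gF ->]|[i ->]|[i ->]|[->|->]] H D.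
- apply: nC; exists g => // l lg.
  have := D l; rewrite mem_cat lg => /(_ isT) [_]; apply.
  exact: (F_old gF lg).
- by have := D (V i, true); rewrite !inE eqxx orbT => /(_ isT) [/(_ (isnew_V i))].
- by have := D (V i, true); rewrite !inE eqxx orbT => /(_ isT) [/(_ (isnew_V i))].
- by have := D (a, true); rewrite mem_rcons mem_head => /(_ isT) [/(_ isnew_a)].
- by have := D (b, true); rewrite mem_rcons mem_head => /(_ isT) [/(_ isnew_b)].
Qed.

Lemma VP_equiv f Q x : Qok Q -> ~ Conf F (assign_X xs f ++ Q) -> ~~ isnew x ->
  var_in (U (restrict C (assign_X xs f ++ Q))) x =
  var_in (U (restrict F (assign_X xs f ++ Q))) x.
Proof.
move=> hQ nCF xo.
have nCC : ~ Conf C (assign_X xs f ++ Q) by move/(Conf_CF f hQ).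
have [JC [eC cJC DJC]] := U_der (cons_AQ (f:=f) hQ) nCC.
have [JF [eF cJF DJF]] := U_der (cons_AQ (f:=f) hQ) nCF.
rewrite eC eF; apply/var_in_restrictP/var_in_restrictP.
  case=> c cG [hc [l lc [lx nl]]].
  case/memC: cG hc lc => [[g gF ->]|[i ->]|[i ->]|[->|->]] hc lc.
  - exists g => //; split.
      apply/hasP => [[l' l'g /DJF /DerF_C /DJC l'J]]; move/hasP: hc; apply.
      by exists l'; rewrite // mem_cat l'g.
    exists l; last split => //.
      move: lc; rewrite mem_cat => /orP[//|/mem2 [e|e]]; move: xo;
      by rewrite -lx e /= ?isnew_a ?isnew_b.
    by apply/negP => /DJF /DerF_C /DJC; apply/negP.
  - by move/hasP: hc; case; exists (V i, true); rewrite ?inE ?eqxx ?orbT //; apply/DJC/Der_V.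
  - by move/hasP: hc; case; exists (V i, true); rewrite ?inE ?eqxx ?orbT //; apply/DJC/Der_V.
  - by move/hasP: hc; case; exists (a, true); rewrite ?mem_rcons ?mem_head //; apply/DJC/Der_a.
  - by move/hasP: hc; case; exists (b, true); rewrite ?mem_rcons ?mem_head //; apply/DJC/Der_b.
case=> g gF [hg [l lg [lx nl]]].
exists (g ++ [:: (a, false); (b, false)]); first exact: memC_F.
split.
  apply/hasP => [[l' l'c /DJC /(DerC_F hQ nCF) [h1 h2]]].
  move: l'c; rewrite mem_cat => /orP[l'g|/mem2 [e|e]].
  - by move/hasP: hg; apply; exists l' => //; apply/DJF/h2/(F_old gF l'g).
  - by move: (h1 ltac:(by rewrite e /= isnew_a)); rewrite e.
  - by move: (h1 ltac:(by rewrite e /= isnew_b)); rewrite e.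
exists l; first by rewrite mem_cat lg.
split => //; apply/negP => /DJC /(DerC_F hQ nCF) [_ h2].
move/negP: nl; apply; apply/DJF/h2.
by rewrite /neg_lit /= lx.
Qed.

Lemma Qok_ext Q y t : Qok Q -> y \in ys -> (y, t) \notin Q -> (y, ~~ t) \notin Q ->
  Qok (Q ++ [:: (y, t)]).
Proof.
case=> cQ vQ yy h1 h2; split; first by apply: consistent_cat1.
by move=> l; rewrite mem_cat inE => /orP[/vQ //|/eqP ->].
Qed.

Lemma full_equiv f T Q : Qok Q ->
  dmst (mem (xs ++ ys)) (restrict C (assign_X xs f ++ Q)) T <->
  dmst (mem ys) (restrict F (assign_X xs f ++ Q)) T.
Proof.
elim: T Q => [|x T1 IH1 T2 IH2] Q hQ.
  have c := cons_AQ (f:=f) hQ.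
  have e1 := dmst_leafP (mem (xs ++ ys)) C c.
  have e2 := dmst_leafP (mem ys) F c.
  have e3 := Conf_CF f hQ.
  tauto.
rewrite !dmst_nodeP ?(cons_AQ (f:=f) hQ) //.
have ext : forall G, consistent (assign_X xs f ++ Q) -> ~ Conf G (assign_X xs f ++ Q) ->
    var_in (U (restrict G (assign_X xs f ++ Q))) x -> x \in ys ->
    forall t, Qok (Q ++ [:: (x, t)]).
  move=> G cI nC vx xy t; apply: Qok_ext => //; apply/negP => h.
  - by apply: (var_in_U_notDer (b:=t) cI nC vx); apply: DerI; rewrite mem_cat h orbT.
  - by apply: (var_in_U_notDer (b:=~~t) cI nC vx); apply: DerI; rewrite mem_cat h orbT.
split.
  case=> nC Bx vx h1 h2.
  have nCF : ~ Conf F (assign_X xs f ++ Q) by move/(Conf_CF f hQ).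
  have xy : x \in ys.
    move: Bx; rewrite /= mem_cat => /orP[/tnthP [i ei]|//].
    exfalso; apply: (var_in_U_notDer (b:=f i) (cons_AQ (f:=f) hQ) nC vx).
    by apply: DerI; rewrite mem_cat ei memAX_X eqxx.
  have E := ext _ (cons_AQ (f:=f) hQ) nC vx xy.
  split => //; first by rewrite -VP_equiv // y_old.
    by rewrite -catA; apply/(IH1 _ (E false)); rewrite catA.
  by rewrite -catA; apply/(IH2 _ (E true)); rewrite catA.
case=> nC By vx h1 h2.
have nCC : ~ Conf C (assign_X xs f ++ Q) by move/(Conf_CF f hQ).
have E := ext _ (cons_AQ (f:=f) hQ) nC vx By.
split => //; first by move: By; rewrite !inE mem_cat => ->; rewrite orbT.
  by rewrite VP_equiv // y_old.
  by rewrite -catA; apply/(IH1 _ (E false)); rewrite catA.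
by rewrite -catA; apply/(IH2 _ (E true)); rewrite catA.
all: exact: (cons_AQ (f:=f) hQ).
Qed.


Definition ext p f : bool := [forall i, if p i is Some t then f i == t else true].
Definition mNone p := #|[pred i | p i == None]|.
Definition upd p i t : {ffun 'I_n -> option bool} :=
  [ffun j => if j == i then Some t else p j].

Lemma ext_upd p i t f : p i = None -> ext (upd p i t) f = ext p f && (f i == t).
Proof.
move=> pi; apply/forallP/andP => [H|[/forallP H e] j].
  split; last by move: (H i); rewrite ffunE eqxx.
  apply/forallP => j; move: (H j); rewrite ffunE.
  by case: (eqVneq j i) => [->|//]; rewrite pi.
rewrite ffunE; case: (eqVneq j i) => [->|_] //; exact: H.
Qed.

Lemma mNone_upd p i t : p i = None -> mNone p = (mNone (upd p i t)).+1.
Proof.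
move=> pi; rewrite /mNone (cardD1 i) inE pi eqxx add1n; congr _.+1.
apply: eq_card => j; rewrite !inE ffunE.
by case: (eqVneq j i) => [->|].
Qed.

Lemma sum_split p i (k : {ffun 'I_n -> bool} -> nat) : p i = None ->
  \sum_(f | ext p f) k f =
  \sum_(f | ext (upd p i false) f) k f + \sum_(f | ext (upd p i true) f) k f.
Proof.
move=> pi; rewrite (bigID (fun f : {ffun 'I_n -> bool} => f i)) /= addnC.
congr addn; apply: eq_bigl => f; rewrite ext_upd //.
  by case: (f i).
by case: (f i); rewrite ?andbT ?andbF.
Qed.

Definition f0 p : {ffun 'I_n -> bool} := [ffun i => odflt false (p i)].

Lemma full_ext p f : mNone p = 0 -> ext p f = (f == f0 p).
Proof.
move=> m0; have pS : forall i, p i != None.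
  move=> i; apply/negP => /eqP pi.
  by move: m0; rewrite /mNone (cardD1 i) inE pi eqxx.
apply/forallP/eqP => [H|->] ; last first.
  by move=> i; rewrite ffunE; case: (p i).
apply/ffunP => i; move: (H i) (pS i); rewrite ffunE.
by case: (p i) => // t /eqP.
Qed.

Lemma full_sum p (k : {ffun 'I_n -> bool} -> nat) : mNone p = 0 ->
  \sum_(f | ext p f) k f = k (f0 p).
Proof. by move=> m0; apply: big_pred1 => f; rewrite full_ext. Qed.

Lemma full_P p Q : mNone p = 0 -> P p ++ Q =i assign_X xs (f0 p) ++ Q.
Proof.
move=> m0 [x t]; rewrite !mem_cat; congr orb; apply/idP/idP.
  case/memP => i pi ->; rewrite memAX_X ffunE pi //.
case/memAX => i -> ->; rewrite memP_X ffunE.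
have : p i != None.
  apply/negP => /eqP pi.
  by move: m0; rewrite /mNone (cardD1 i) inE pi eqxx.
by case: (p i).
Qed.

Lemma memP_upd p i t l : p i = None -> (l \in P (upd p i t)) = (l \in P p) || (l == (X i, t)).
Proof.
move=> pi; case: l => x u; apply/idP/orP.
  case/memP => j; rewrite ffunE; case: (eqVneq j i) => [-> [<-] ->|ne pj ->].
    by right.
  by left; apply/memP; exists j.
case=> [/memP [j pj ->]|/eqP [-> ->]]; apply/memP.
  exists j => //; rewrite ffunE; case: (eqVneq j i) => [e|//].
  by move: pj; rewrite e pi.
by exists i; rewrite // ffunE eqxx.
Qed.

Lemma P_upd_cat p i t Q : p i = None ->
  (P p ++ Q) ++ [:: (X i, t)] =i P (upd p i t) ++ Q.
Proof.
move=> pi l; rewrite !mem_cat memP_upd // inE.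
by case: (l \in P p); case: (l \in Q); case: (l == _).
Qed.

Lemma exists_None p m : mNone p = m.+1 -> exists i, p i = None.
Proof.
move=> h; have : 0 < mNone p by rewrite h.
by case/card_gt0P => i; rewrite inE => /eqP; exists i.
Qed.

Lemma card_ext m p : mNone p = m -> \sum_(f | ext p f) 1 = 2 ^ m.
Proof.
elim: m p => [|m IH] p hm; first by rewrite full_sum.
have [i pi] := exists_None hm.
rewrite (sum_split _ pi) !IH //; first by rewrite expnS mul2n addnn.
  by move: hm; rewrite (mNone_upd true pi) => [[]].
by move: hm; rewrite (mNone_upd false pi) => [[]].
Qed.

Lemma Qok_nil : Qok [::].
Proof. by split. Qed.

Lemma UB m p (k : {ffun 'I_n -> bool} -> nat) : mNone p = m ->
  (forall f, ext p f -> has_tree_of_size (mem ys) (restrict F (assign_X xs f)) (k f)) ->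
  has_tree_of_size (mem (xs ++ ys)) (restrict C (P p ++ [::]))
     (2 ^ m - 1 + \sum_(f | ext p f) k f).
Proof.
elim: m p => [|m IH] p hm H.
  rewrite full_sum // expn0 subnn add0n.
  have [T [hT sT]] := H (f0 p) ltac:(by rewrite full_ext).
  exists T; split => //.
  rewrite (restrict_mem _ (full_P [::] hm)).
  by apply/(full_equiv _ _ Qok_nil); rewrite cats0.
have [i pi] := exists_None hm.
have hm0 : mNone (upd p i false) = m by move: hm; rewrite (mNone_upd false pi) => [[]].
have hm1 : mNone (upd p i true) = m by move: hm; rewrite (mNone_upd true pi) => [[]].
have [T0 [h0 s0]] := IH _ hm0 ltac:(by move=> f; rewrite ext_upd // => /andP[/H]).
have [T1 [h1 s1]] := IH _ hm1 ltac:(by move=> f; rewrite ext_upd // => /andP[/H]).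
exists (Node (X i) T0 T1); split; last first.
  rewrite /= s0 s1 (sum_split _ pi) expnS.
  have := expn_gt0 2 m; lia.
apply/dmst_nodeP; first exact: (cons_PQ (p:=p) Qok_nil).
split.
- exact: (partial_noConf Qok_nil pi).
- by rewrite /= mem_cat mem_tnth.
- exact: (partial_var Qok_nil pi).
- by rewrite (restrict_mem _ (P_upd_cat false [::] pi)).
- by rewrite (restrict_mem _ (P_upd_cat true [::] pi)).
Qed.

Lemma choice_ext (A : Type) (Pr : A -> bool) (R : A -> nat -> Prop) :
  (forall x, Pr x -> exists k, R x k) -> exists k : A -> nat, forall x, Pr x -> R x (k x).
Proof.
move=> H.
exists (fun x => match excluded_middle_informative (exists k, R x k) with
                 | left h => proj1_sig (constructive_indefinite_description _ h)
                 | right _ => 0 end).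
move=> x px; case: excluded_middle_informative => [h|h].
  exact: proj2_sig (constructive_indefinite_description _ h).
by case: h; apply: H.
Qed.

Lemma LB_full T p Q : Qok Q -> mNone p = 0 ->
  dmst (mem (xs ++ ys)) (restrict C (P p ++ Q)) T ->
  exists k : {ffun 'I_n -> bool} -> nat,
    (forall f, ext p f -> has_tree_of_size (mem ys) (restrict F (assign_X xs f ++ Q)) (k f))
    /\ 2 ^ mNone p - 1 + \sum_(f | ext p f) k f <= Defs.tsize T.
Proof.
move=> hQ hm hT; exists (fun _ => Defs.tsize T); split; last first.
  by rewrite full_sum // hm expn0 subnn add0n.
move=> f; rewrite full_ext // => /eqP ->; exists T; split => //.
apply/(full_equiv _ _ hQ).
by rewrite -(restrict_mem _ (full_P Q hm)).
Qed.

Lemma LB T p Q : Qok Q ->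
  dmst (mem (xs ++ ys)) (restrict C (P p ++ Q)) T ->
  exists k : {ffun 'I_n -> bool} -> nat,
    (forall f, ext p f -> has_tree_of_size (mem ys) (restrict F (assign_X xs f ++ Q)) (k f))
    /\ 2 ^ mNone p - 1 + \sum_(f | ext p f) k f <= Defs.tsize T.
Proof.
elim: T p Q => [|x T1 IH1 T2 IH2] p Q hQ hT.
all: have [hm|[m hm]] : mNone p = 0 \/ exists m, mNone p = m.+1
  by case: (mNone p) => [|m]; [left|right; exists m].
all: try (exact: (LB_full hQ hm hT)).
all: have [i0 pi0] := exists_None hm.
  by move/(dmst_leafP _ _ (cons_PQ (p:=p) hQ)): hT => /(partial_noConf hQ pi0).
case/(dmst_nodeP _ _ _ _ _ (cons_PQ (p:=p) hQ)): hT => nC Bx vx h1 h2.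
have cI := cons_PQ (p:=p) hQ.
move: Bx; rewrite /= mem_cat => /orP[/tnthP [i ei]|xy]; first subst x.
  have pi : p i = None.
    case E: (p i) => [t|] //; exfalso.
    apply: (var_in_U_notDer (b:=t) cI nC vx); apply: DerI.
    by rewrite mem_cat memP_X E eqxx.
  have hm0 : mNone (upd p i false) = m by move: hm; rewrite (mNone_upd false pi) => [[]].
  have hm1 : mNone (upd p i true) = m by move: hm; rewrite (mNone_upd true pi) => [[]].
  move: h1 h2; rewrite (restrict_mem _ (P_upd_cat false Q pi)).
  rewrite (restrict_mem _ (P_upd_cat true Q pi)) => h1 h2.
  have [k0 [H0 S0]] := IH1 _ _ hQ h1.
  have [k1 [H1 S1]] := IH2 _ _ hQ h2.
  exists (fun f => if f i then k1 f else k0 f); split.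
    move=> f ef; case fi: (f i).
      by apply: H1; rewrite ext_upd // ef fi.
    by apply: H0; rewrite ext_upd // ef fi.
  rewrite (sum_split _ pi).
  rewrite (@eq_bigr _ _ _ _ _ _ _ k0); last first.
    by move=> f; rewrite ext_upd // => /andP[_ /eqP ->].
  rewrite (@eq_bigr _ _ _ _ _ (fun f => ext (upd p i true) f) _ k1); last first.
    by move=> f; rewrite ext_upd // => /andP[_ /eqP ->].
  move: S0 S1; rewrite hm0 hm1 hm /= expnS.
  have := expn_gt0 2 m; lia.
have xnx : x \notin xs.
  apply/negP => /tnthP [i ei]; move: xy; rewrite ei; apply/negP; exact: X_noty.
have nQ : forall t, (x, t) \notin Q.
  move=> t; apply/negP => h.
  apply: (var_in_U_notDer (b:=t) cI nC vx); apply: DerI; by rewrite mem_cat h orbT.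
have hQb : forall t, Qok (Q ++ [:: (x, t)]).
  by move=> t; apply: Qok_ext => //; apply: nQ.
move: h1 h2; rewrite -!catA => h1 h2.
have [k0 [H0 S0]] := IH1 _ _ (hQb false) h1.
have [k1 [H1 S1]] := IH2 _ _ (hQb true) h2.
have [k Hk] := @choice_ext _ (ext p) (fun f kk =>
   has_tree_of_size (mem ys) (restrict F (assign_X xs f ++ Q)) kk /\ kk <= (k0 f + k1 f).+1)
   ltac:(move=> f ef; have [kk h3 h4] := @tree_split (mem ys) F (assign_X xs f ++ Q) x
          (k0 f) (k1 f) (cons_AQ (f:=f) hQ) xy
          ltac:(move=> t; rewrite mem_cat negb_or nQ andbT; apply/negP;
                 by move/memAX_var; apply/negP)
          ltac:(by rewrite -catA; apply: H0) ltac:(by rewrite -catA; apply: H1);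
         by exists kk).
exists k; split; first by move=> f /Hk [].
have Hs : \sum_(f | ext p f) k f <= \sum_(f | ext p f) ((k0 f + k1 f) + 1).
  by apply: leq_sum => f /Hk [_]; rewrite addn1.
move: Hs; rewrite !big_split /= (card_ext hm) => Hs.
move: S0 S1 Hs; rewrite /= hm.
have := expn_gt0 2 m.+1; lia.
Qed.

End CX.


Lemma htosP B G k : htos_b B G k <-> has_tree_of_size B G k.
Proof. by rewrite /htos_b; case: excluded_middle_informative. Qed.

Lemma s_some B G k : has_tree_of_size B G k ->
  exists m, [/\ s B G = Some m, has_tree_of_size B G m &
                forall k', has_tree_of_size B G k' -> m <= k'].
Proof.
move=> h; rewrite /s; case: excluded_middle_informative => [H|H]; last first.
  by case: H; exists k.
case: ex_minnP => m /htosP hm hmin; exists m; split => // k' /htosP; exact: hmin.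
Qed.

Lemma s_none B G : ~ (exists k, has_tree_of_size B G k) -> s B G = None.
Proof. by move=> H; rewrite /s; case: excluded_middle_informative. Qed.

Lemma big_oadd_some (I : finType) (o : I -> option nat) (k : I -> nat) :
  (forall i, o i = Some (k i)) -> \big[oadd/Some 0]_i o i = Some (\sum_i k i).
Proof.
move=> H; apply: (big_rec2 (fun x y => x = Some y)) => // i x y _ ->.
by rewrite H.
Qed.

Lemma big_oadd_none (I : finType) (o : I -> option nat) i0 :
  o i0 = None -> \big[oadd/Some 0]_i o i = None.
Proof.
move=> h; have : i0 \in index_enum I by rewrite mem_index_enum.
elim: (index_enum I) => [|j r IH] //; rewrite inE big_cons => /orP[/eqP <-|/IH ->].
  by rewrite h.
by case: (o j).
Qed.

Theorem corollary3 (n : nat) (xs : n.-tuple nat) (ys zs : seq nat)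
  (F : cnf) (vs : n.-tuple nat) (a b : nat) :
  (* X = {x_1..x_n} distinct; X, Y, Z pairwise disjoint *)
  uniq xs ->
  all (fun x => x \notin ys) xs -> all (fun x => x \notin zs) xs ->
  all (fun y => y \notin zs) ys ->
  (* F is a formula over X u Y u Z *)
  (forall x, var_in F x -> x \in xs ++ ys ++ zs) ->
  (* unit propagation determines Z from every assignment to X u Y *)
  (forall f : nat -> bool,
     let G := U (restrict F (assign_on (xs ++ ys) f)) in
     [::] \in G \/ (forall z, z \in zs -> ~~ var_in G z)) ->
  (* a, b, v_1..v_n are new, pairwise distinct variables *)
  uniq (a :: b :: vs) ->
  all (fun v => v \notin xs ++ ys ++ zs) (a :: b :: vs) ->
  s (mem (xs ++ ys)) (cX xs vs a b F)
  = oadd (Some (2 ^ n - 1))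
      (\big[oadd/Some 0]_(f : {ffun 'I_n -> bool})
          s (mem ys) (restrict F (assign_X xs f))).
Proof.
move=> Hux Hxy _ _ HF _ Huv Hnew.
pose p0 : {ffun 'I_n -> option bool} := [ffun _ => None].
have P0 : P xs p0 ++ [::] = [::].
  rewrite cats0 /P; rewrite (@eq_filter _ _ pred0) ?filter_pred0 // => i.
  by rewrite ffunE.
have m0 : mNone p0 = n.
  rewrite /mNone -[RHS](card_ord n); apply: eq_card => i; by rewrite !inE ffunE.
have e0 : forall f, ext p0 f by move=> f; apply/forallP => i; rewrite ffunE.
have sumE : forall k : {ffun 'I_n -> bool} -> nat,
    \sum_(f | ext p0 f) k f = \sum_f k f.
  by move=> k; apply: eq_bigl => f; rewrite e0.
case: (classic (forall f : {ffun 'I_n -> bool},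
          exists k, has_tree_of_size (mem ys) (restrict F (assign_X xs f)) k)) => [Hall|Hnot].
  have [sm Hsm] := @choice_ext _ predT (fun f m =>
      [/\ s (mem ys) (restrict F (assign_X xs f)) = Some m,
          has_tree_of_size (mem ys) (restrict F (assign_X xs f)) m &
          forall k', has_tree_of_size (mem ys) (restrict F (assign_X xs f)) k' -> m <= k'])
     ltac:(move=> f _; have [k hk] := Hall f; exact: s_some hk).
  rewrite (big_oadd_some (k := sm)); last by move=> f; case: (Hsm f isT).
  have hUB := UB Hux Hxy HF Huv Hnew (p := p0) (k := sm) m0
    ltac:(by move=> f _; case: (Hsm f isT)).
  move: hUB; rewrite P0 restrict_nil => hUB.
  have [M [-> [TM [hTM sTM]] Mmin]] := s_some hUB.
  have := Mmin _ hUB; rewrite sumE => Mle.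
  have hTM' : dmst (mem (xs ++ ys)) (restrict (cX xs vs a b F) (P xs p0 ++ [::])) TM.
    by rewrite P0 restrict_nil.
  have [k [Hk Sk]] := @LB _ _ _ _ _ _ _ _ Hux Hxy HF Huv Hnew TM p0 [::] ltac:(by split) hTM'.
  move: Sk; rewrite m0 sumE sTM => Sk.
  have : \sum_f sm f <= \sum_f k f.
    apply: leq_sum => f _; case: (Hsm f isT) => _ _; apply.
    by move: (Hk f (e0 f)); rewrite cats0.
  move=> hs /=; congr Some; apply/eqP; rewrite eqn_leq; apply/andP; split; first exact: Mle.
  by apply: leq_trans Sk; rewrite leq_add2l.
case: (not_all_ex_not _ _ Hnot) => f0 Hf0.
rewrite (big_oadd_none (i0 := f0)); last exact: s_none.
rewrite /=; apply: s_none => [[k [T [hT sT]]]].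
have hT' : dmst (mem (xs ++ ys)) (restrict (cX xs vs a b F) (P xs p0 ++ [::])) T.
  by rewrite P0 restrict_nil.
have [kk [Hk _]] := @LB _ _ _ _ _ _ _ _ Hux Hxy HF Huv Hnew T p0 [::] ltac:(by split) hT'.
by apply: Hf0; exists (kk f0); move: (Hk f0 (e0 f0)); rewrite cats0.
Qed.
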